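(* Let $a>b>0$ and let $E$ be the ellipse $\frac{x^2}{a^2}+\frac{y^2}{b^2}=1$. Put $\delta=\sqrt{a^4-a^2b^2+b^4}$. Then for every 3-periodic billiard orbit (triangle) $P_1P_2P_3$ in $E$, the ratio of its inradius $r$ to its circumradius $R$ is the same, namely \[ \frac{r}{R}=\frac{2(\delta-b^2)(a^2-\delta)}{(a^2-b^2)^2}. \]
   Context: A 3-periodic billiard orbit in the ellipse $E$ is a nondegenerate triangle $P_1P_2P_3$ with all vertices on $E$ such that at each vertex $P_i$ the normal line to $E$ at $P_i$ bisects the interior angle of the triangle at $P_i$ (equal angles of incidence and reflection). These orbits form a one-parameter family (one through every point of $E$). The inradius and circumradius are the radii of the incircle and circumcircle of the triangle. *)

(* Defs.v *)
From Stdlib Require Import Reals Lra.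
Open Scope R_scope.

Definition pt := (R * R)%type.

Definition vsub (P Q : pt) : pt := (fst P - fst Q, snd P - snd Q).
Definition cross (u v : pt) : R := fst u * snd v - snd u * fst v.
Definition norm (u : pt) : R := sqrt (fst u ^ 2 + snd u ^ 2).
Definition dist (P Q : pt) : R := norm (vsub P Q).

Definition on_ellipse (a b : R) (P : pt) : Prop :=
  fst P ^ 2 / a ^ 2 + snd P ^ 2 / b ^ 2 = 1.

Definition ell_normal (a b : R) (P : pt) : pt := (fst P / a ^ 2, snd P / b ^ 2).

Definition nondegenerate (P1 P2 P3 : pt) : Prop :=
  cross (vsub P2 P1) (vsub P3 P1) <> 0.

Definition bisector_dir (P Q S : pt) : pt :=
  let u := vsub Q P in let v := vsub S P in
  (fst u / norm u + fst v / norm v, snd u / norm u + snd v / norm v).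

Definition normal_bisects (a b : R) (P Q S : pt) : Prop :=
  cross (ell_normal a b P) (bisector_dir P Q S) = 0.

Definition billiard3 (a b : R) (P1 P2 P3 : pt) : Prop :=
  nondegenerate P1 P2 P3 /\
  on_ellipse a b P1 /\ on_ellipse a b P2 /\ on_ellipse a b P3 /\
  normal_bisects a b P1 P2 P3 /\
  normal_bisects a b P2 P3 P1 /\
  normal_bisects a b P3 P1 P2.

Definition dist_line (X A B : pt) : R :=
  Rabs (cross (vsub B A) (vsub X A)) / norm (vsub B A).

Definition strictly_inside (X P1 P2 P3 : pt) : Prop :=
  (0 < cross (vsub P2 P1) (vsub X P1) /\ 0 < cross (vsub P3 P2) (vsub X P2) /\
   0 < cross (vsub P1 P3) (vsub X P3)) \/
  (cross (vsub P2 P1) (vsub X P1) < 0 /\ cross (vsub P3 P2) (vsub X P2) < 0 /\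
   cross (vsub P1 P3) (vsub X P3) < 0).

Definition is_inradius (P1 P2 P3 : pt) (r : R) : Prop :=
  exists I : pt, strictly_inside I P1 P2 P3 /\
    dist_line I P1 P2 = r /\ dist_line I P2 P3 = r /\ dist_line I P3 P1 = r.

Definition is_circumradius (P1 P2 P3 : pt) (Rc : R) : Prop :=
  exists O : pt, dist O P1 = Rc /\ dist O P2 = Rc /\ dist O P3 = Rc.

(* Main.v *)
Require Import Defs.
From Stdlib Require Import Reals Lra Lia Psatz.
Open Scope R_scope.
Lemma sqrt_sq_eq x : 0 <= x -> sqrt x ^ 2 = x.
Proof. intro; simpl; rewrite Rmult_1_r; apply sqrt_sqrt; auto. Qed.

Lemma norm_sq (u:pt) : norm u ^ 2 = fst u ^2 + snd u ^2.
Proof. unfold norm; apply sqrt_sq_eq; nra. Qed.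

Lemma norm_nonneg u : 0 <= norm u.
Proof. apply sqrt_pos. Qed.

Lemma norm_pos (u:pt) : 0 < fst u ^2 + snd u ^2 -> 0 < norm u.
Proof. intro; unfold norm; apply sqrt_lt_R0; auto. Qed.

Lemma norm_vsub_sym P Q : norm (vsub P Q) = norm (vsub Q P).
Proof. unfold norm, vsub; simpl; f_equal; ring. Qed.

Lemma vertex_core (nx ny ex ey fx fy : R):
 ex^2+ey^2=1 -> fx^2+fy^2=1 -> ex*fy - ey*fx <> 0 ->
 nx*(ey+fy) - ny*(ex+fx) = 0 ->
 nx*ex+ny*ey = nx*fx+ny*fy /\
 (nx^2+ny^2)*(2+2*(ex*fx+ey*fy)) = 4*(nx*ex+ny*ey)^2.
Proof.
intros He Hf Hc Hb.
assert (Hp : (ex+fx)^2+(ey+fy)^2 <> 0).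
{ intro H0. apply Hc.
  assert (fx = -ex) by nra. assert (fy = -ey) by nra. subst; ring. }
assert (Hid : ((ex+fx)^2+(ey+fy)^2) * ((nx*ex+ny*ey) - (nx*fx+ny*fy)) =
   ((ex+fx)*(ex-fx)+(ey+fy)*(ey-fy))*(nx*(ex+fx)+ny*(ey+fy))
   - ((ex+fx)*(ey-fy) - (ey+fy)*(ex-fx))*(nx*(ey+fy)-ny*(ex+fx))) by ring.
assert (Hq : (ex+fx)*(ex-fx)+(ey+fy)*(ey-fy) = 0) by nra.
rewrite Hq, Hb in Hid.
assert (E1 : nx*ex+ny*ey = nx*fx+ny*fy).
{ assert (((ex+fx)^2+(ey+fy)^2) * ((nx*ex+ny*ey) - (nx*fx+ny*fy)) = 0) by (rewrite Hid; ring).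
  apply Rmult_integral in H. destruct H; [contradiction|lra]. }
split; auto.
assert (Hid2 : (nx^2+ny^2)*((ex+fx)^2+(ey+fy)^2) = (nx*(ex+fx)+ny*(ey+fy))^2 + (nx*(ey+fy)-ny*(ex+fx))^2) by ring.
rewrite Hb in Hid2.
replace (2+2*(ex*fx+ey*fy)) with ((ex+fx)^2+(ey+fy)^2) by nra.
rewrite Hid2. replace (nx*(ex+fx)+ny*(ey+fy)) with (2*(nx*ex+ny*ey)) by nra. ring.
Qed.
Lemma sq0 x : x^2 = 0 -> x = 0.
Proof. intro H. destruct (Req_dec x 0); auto. exfalso. assert (0 < x^2) by (simpl; rewrite Rmult_1_r; apply Rsqr_pos_lt; auto). lra. Qed.

Lemma side a b X1 Y1 X2 Y2 K: X1^2+Y1^2=1 -> X2^2+Y2^2=1 ->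
  (X1-X2)^2+(Y1-Y2)^2 <> 0 ->
  K*((a*X2-a*X1)^2+(b*Y2-b*Y1)^2) = (X1*X2+Y1*Y2-1)^2 ->
  (1-K*(a^2-b^2))*(X1*X2) + (1+K*(a^2-b^2))*(Y1*Y2) = 1-K*(a^2+b^2).
Proof.
intros H1 H2 Hd HK.
set (d := 1-X1*X2-Y1*Y2).
set (f := X1*X2-Y1*Y2).
assert (HL : (a*X2-a*X1)^2+(b*Y2-b*Y1)^2 = d*((a^2+b^2)-(a^2-b^2)*f)
  + (b^2*X2^2+a^2-a^2*X2^2)*(X1^2+Y1^2-1) + (b^2-b^2*Y1^2+a^2*Y1^2)*(X2^2+Y2^2-1))
  by (unfold d, f; ring).
rewrite H1, H2 in HL.
assert (Hd' : d <> 0) by (unfold d; intro; apply Hd; nra).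
assert (K*d*((a^2+b^2)-(a^2-b^2)*f) = d*d).
{ replace (d*d) with ((X1*X2+Y1*Y2-1)^2) by (unfold d; ring).
  rewrite <- HK, HL. ring. }
assert (K*((a^2+b^2)-(a^2-b^2)*f) = d).
{ apply (Rmult_eq_reg_l d); auto. rewrite <- H. ring. }
unfold d, f in H0. nra.
Qed.

Lemma EFQ K c s u v : u = 1 - v ->
  let al := 1-K*c in let be := 1+K*c in let ga := 1-K*s in
  let pp := al^2*u + be^2*v in
  al*(ga^2*al^2*u - (pp-ga^2)*be^2*v) + be*(ga^2*be^2*v - (pp-ga^2)*al^2*u) - ga*pp^2
  = (K^2*c^2+2*K*s-3) * (K*(s-c*(u-v))*(1-2*K*c*(u-v)+K^2*c^2)).
Proof. intros ->. simpl. ring. Qed.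

Lemma closure K c s X1 Y1 X2 Y2 X3 Y3 :
  0 < c -> c < s -> 0 <= K ->
  X1^2+Y1^2=1 -> X2^2+Y2^2=1 -> X3^2+Y3^2=1 ->
  (X1-X2)^2+(Y1-Y2)^2 <> 0 -> (X2-X3)^2+(Y2-Y3)^2 <> 0 ->
  (1-K*c)*(X1*X2) + (1+K*c)*(Y1*Y2) = 1-K*s ->
  (1-K*c)*(X1*X3) + (1+K*c)*(Y1*Y3) = 1-K*s ->
  (1-K*c)*(X2*X3) + (1+K*c)*(Y2*Y3) = 1-K*s ->
  K^2*c^2+2*K*s-3 = 0.
Proof.
intros Hc Hs HK C1 C2 C3 D12 D23 R12 R13 R23.
assert (Hbe : 0 < 1+K*c) by nra.
set (al := 1-K*c) in *. set (be := 1+K*c) in *. set (ga := 1-K*s) in *.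
set (pp := al^2*X1^2 + be^2*Y1^2).
assert (Hpp : 0 < pp).
{ destruct (Rle_lt_dec pp 0) as [H|H]; auto. exfalso.
  assert (HX2 : (al*X1)^2 = 0) by (unfold pp in H; nra).
  assert (HY2 : (be*Y1)^2 = 0) by (unfold pp in H; nra).
  assert (HX : al*X1 = 0) by (apply sq0; auto).
  assert (HY' : be*Y1 = 0) by (apply sq0; auto).
  assert (HY : Y1 = 0) by (apply Rmult_integral in HY'; destruct HY'; [unfold be in *; lra|auto]).
  assert (HX1 : X1^2 = 1) by (subst; nra).
  assert (Hal : al = 0) by nra.
  assert (ga = 0) by (rewrite <- R12, HY, Hal; ring).
  unfold al, ga in *. nra. }
set (t2 := al*X1*Y2 - be*Y1*X2).
set (t3 := al*X1*Y3 - be*Y1*X3).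
assert (T2 : pp = ga^2 + t2^2).
{ assert (pp*(X2^2+Y2^2) = (al*X1*X2+be*Y1*Y2)^2 + t2^2) by (unfold pp, t2; ring).
  rewrite C2 in H. rewrite Rmult_1_r in H. rewrite H, <- R12. ring. }
assert (T3 : pp = ga^2 + t3^2).
{ assert (pp*(X3^2+Y3^2) = (al*X1*X3+be*Y1*Y3)^2 + t3^2) by (unfold pp, t3; ring).
  rewrite C3 in H. rewrite Rmult_1_r in H. rewrite H, <- R13. ring. }
assert (PX2 : pp*X2 = ga*al*X1 - t2*be*Y1) by (rewrite <- R12; unfold pp, t2; ring).
assert (PY2 : pp*Y2 = ga*be*Y1 + t2*al*X1) by (rewrite <- R12; unfold pp, t2; ring).
assert (PX3 : pp*X3 = ga*al*X1 - t3*be*Y1) by (rewrite <- R13; unfold pp, t3; ring).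
assert (PY3 : pp*Y3 = ga*be*Y1 + t3*al*X1) by (rewrite <- R13; unfold pp, t3; ring).
assert (Ht : t3 = - t2).
{ assert ((t3-t2)*(t3+t2) = 0) by nra.
  apply Rmult_integral in H. destruct H; [|lra]. exfalso. apply D23.
  assert (pp*(X2-X3) = 0) by nra. assert (pp*(Y2-Y3) = 0) by nra.
  assert (X2-X3 = 0) by (apply Rmult_integral in H0; destruct H0; lra).
  assert (Y2-Y3 = 0) by (apply Rmult_integral in H1; destruct H1; lra).
  rewrite H2, H3. ring. }
rewrite Ht in PX3, PY3.
assert (E : pp^2*((al*X2*X3) + be*Y2*Y3) = ga*pp^2).
{ rewrite <- R23. ring. }
assert (E2 : al*(ga^2*al^2*X1^2 - (pp-ga^2)*be^2*Y1^2) + be*(ga^2*be^2*Y1^2 - (pp-ga^2)*al^2*X1^2) - ga*pp^2 = 0).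
{ rewrite T2 at 1 3. 
  replace (pp^2*((al*X2*X3) + be*Y2*Y3)) with (al*(pp*X2)*(pp*X3) + be*(pp*Y2)*(pp*Y3)) in E by ring.
  rewrite PX2, PY2, PX3, PY3 in E. rewrite <- T2 in *. nra. }
assert (Hu : X1^2 = 1 - Y1^2) by lra.
pose proof (EFQ K c s (X1^2) (Y1^2) Hu) as HE. cbv zeta in HE.
unfold pp, al, be, ga in E2. rewrite HE in E2.
assert (HK0 : 0 < K).
{ destruct (Req_dec K 0) as [H0|H0]; [|lra]. exfalso. apply D12.
  unfold al, be, ga in R12. rewrite H0 in R12. nra. }
assert (Q1 : 0 < s-c*(X1^2-Y1^2)) by nra.
assert (Q2 : 0 < 1-2*K*c*(X1^2-Y1^2)+K^2*c^2).
{ replace (1-2*K*c*(X1^2-Y1^2)+K^2*c^2) with ((1-K*c)^2 + 4*(K*c)*Y1^2) by (rewrite Hu; ring).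
  destruct (Rle_lt_dec ((1-K*c)^2 + 4*(K*c)*Y1^2) 0) as [H|H]; auto. exfalso.
  assert (HKc : K*c > 0) by nra.
  assert (G1 : 0 <= (K*c)*Y1^2) by (apply Rmult_le_pos; [lra| apply pow2_ge_0]).
  assert (G2 : 0 <= (1-K*c)^2) by apply pow2_ge_0.
  assert (G3 : (1-K*c)^2 = 0) by lra. assert (G4 : (K*c)*Y1^2 = 0) by lra.
  assert (G5 : Y1^2 = 0) by (apply Rmult_integral in G4; destruct G4; lra).
  apply sq0 in G3. apply sq0 in G5.
  assert (pp = 0) by (unfold pp, al; rewrite G5; replace (1-K*c) with 0 by lra; ring). lra. }
assert (HQ : K*(s-c*(X1^2-Y1^2))*(1-2*K*c*(X1^2-Y1^2)+K^2*c^2) <> 0).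
{ apply Rgt_not_eq. apply Rmult_gt_0_compat; [apply Rmult_gt_0_compat|]; lra. }
apply Rmult_integral in E2. destruct E2; [auto|contradiction].
Qed.
Lemma trig_ABC A B C d1 d2 d3 D2 : 0 < A -> 0 < B -> 0 < C ->
  d1 = (C^2+B^2-A^2)/2 -> d2 = (A^2+C^2-B^2)/2 -> d3 = (B^2+A^2-C^2)/2 ->
  D2 = C^2*B^2 - d1^2 ->
  d1/(C*B) + d2/(A*C) + d3/(B*A) - 1 = 2*D2/((C+A+B)*(C*B*A)).
Proof. intros HA HB HC -> -> -> ->. field. lra. Qed.

Lemma trig x1 y1 x2 y2 x3 y3 L12 L13 L23 :
  0 < L12 -> 0 < L13 -> 0 < L23 ->
  L12^2 = (x2-x1)^2+(y2-y1)^2 -> L13^2 = (x3-x1)^2+(y3-y1)^2 -> L23^2 = (x3-x2)^2+(y3-y2)^2 ->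
  (((x2-x1)/L12)*((x3-x1)/L13) + ((y2-y1)/L12)*((y3-y1)/L13)) +
  (((x3-x2)/L23)*((x1-x2)/L12) + ((y3-y2)/L23)*((y1-y2)/L12)) +
  (((x1-x3)/L13)*((x2-x3)/L23) + ((y1-y3)/L13)*((y2-y3)/L23)) - 1
  = 2*((x2-x1)*(y3-y1) - (y2-y1)*(x3-x1))^2/((L12+L23+L13)*(L12*L13*L23)).
Proof.
intros h1 h2 h3 e1 e2 e3.
rewrite <- (trig_ABC L23 L13 L12 ((x2-x1)*(x3-x1)+(y2-y1)*(y3-y1))
  ((x3-x2)*(x1-x2)+(y3-y2)*(y1-y2)) ((x1-x3)*(x2-x3)+(y1-y3)*(y2-y3))); auto.
- field. lra.
- rewrite e1,e2,e3. field.
- rewrite e1,e2,e3. field.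
- rewrite e1,e2,e3. field.
- rewrite e1,e2. ring.
Qed.

Lemma incircle x1 y1 x2 y2 x3 y3 r :
  0 < norm (vsub (x2,y2) (x1,y1)) -> 0 < norm (vsub (x3,y3) (x2,y2)) -> 0 < norm (vsub (x1,y1) (x3,y3)) ->
  is_inradius (x1,y1) (x2,y2) (x3,y3) r ->
  r * (norm (vsub (x2,y2) (x1,y1)) + norm (vsub (x3,y3) (x2,y2)) + norm (vsub (x1,y1) (x3,y3)))
  = Rabs ((x2-x1)*(y3-y1) - (y2-y1)*(x3-x1)).
Proof.
intros h1 h2 h3 H; destruct H as [[ix iy] [Hin [d1 [d2 d3]]]].
unfold dist_line in d1, d2, d3.
revert d1 d2 d3 Hin.
set (L1 := norm (vsub (x2,y2) (x1,y1))).
set (L2 := norm (vsub (x3,y3) (x2,y2))).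
set (L3 := norm (vsub (x1,y1) (x3,y3))).
unfold strictly_inside, cross, vsub; simpl.
set (c1 := (x2 - x1) * (iy - y1) - (y2 - y1) * (ix - x1)).
set (c2 := (x3 - x2) * (iy - y2) - (y3 - y2) * (ix - x2)).
set (c3 := (x1 - x3) * (iy - y3) - (y1 - y3) * (ix - x3)).
intros d1 d2 d3 Hin.
assert (HD : (x2-x1)*(y3-y1) - (y2-y1)*(x3-x1) = c1+c2+c3) by (unfold c1,c2,c3; ring).
rewrite HD.
assert (a1 : Rabs c1 = r*L1) by (rewrite <- d1; field; unfold L1; lra).
assert (a2 : Rabs c2 = r*L2) by (rewrite <- d2; field; unfold L2; lra).
assert (a3 : Rabs c3 = r*L3) by (rewrite <- d3; field; unfold L3; lra).
destruct Hin as [[p1 [p2 p3]]|[p1 [p2 p3]]].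
- rewrite Rabs_pos_eq in a1, a2, a3 by lra. rewrite Rabs_pos_eq by lra. lra.
- rewrite Rabs_left in a1, a2, a3 by lra. rewrite Rabs_left by lra. lra.
Qed.

Lemma circum x1 y1 x2 y2 x3 y3 Rc :
  is_circumradius (x1,y1) (x2,y2) (x3,y3) Rc ->
  0 <= Rc /\
  4*Rc^2*((x2-x1)*(y3-y1) - (y2-y1)*(x3-x1))^2 =
   ((x2-x1)^2+(y2-y1)^2)*((x3-x1)^2+(y3-y1)^2)*((x3-x2)^2+(y3-y2)^2).
Proof.
intros H; destruct H as [[ox oy] [e1 [e2 e3]]].
unfold Defs.dist in *.
assert (q1 := norm_sq (vsub (ox,oy) (x1,y1))).
assert (q2 := norm_sq (vsub (ox,oy) (x2,y2))).
assert (q3 := norm_sq (vsub (ox,oy) (x3,y3))).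
rewrite e1 in q1. rewrite e2 in q2. rewrite e3 in q3.
split. { rewrite <- e1. apply norm_nonneg. }
unfold vsub in q1, q2, q3; cbn [fst snd] in q1, q2, q3.
set (p := ox - x1) in *. set (q := oy - y1) in *.
set (u1 := x2-x1). set (u2 := y2-y1). set (v1 := x3-x1). set (v2 := y3-y1).
assert (A : p*u1+q*u2 = (u1^2+u2^2)/2).
{ assert (H: p*u1+q*u2 - (u1^2+u2^2)/2 = ((p^2+q^2) - ((ox-x2)^2+(oy-y2)^2))/2) by (unfold p,q,u1,u2; field). simpl in H. lra. }
assert (B : p*v1+q*v2 = (v1^2+v2^2)/2).
{ assert (H: p*v1+q*v2 - (v1^2+v2^2)/2 = ((p^2+q^2) - ((ox-x3)^2+(oy-y3)^2))/2) by (unfold p,q,v1,v2; field). simpl in H. lra. }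
assert (I : (u1*v2-u2*v1)^2*(p^2+q^2) = ((p*u1+q*u2)*v1 - (p*v1+q*v2)*u1)^2 + ((p*u1+q*u2)*v2 - (p*v1+q*v2)*u2)^2) by ring.
rewrite A, B, <- q1 in I.
replace ((x3-x2)^2+(y3-y2)^2) with ((v1-u1)^2+(v2-u2)^2) by (unfold u1,u2,v1,v2; ring).
nra.
Qed.
Lemma final_alg a b K N1 N2 N3 : 0 < b -> b < a -> 0 <= K -> 0 < N1 -> 0 < N2 -> 0 < N3 ->
  K^2*(a^2-b^2)^2+2*K*(a^2+b^2)-3 = 0 ->
  let ga := 1-K*(a^2+b^2) in let W := 2*K*a^2*b^2 in
  (ga+W*N1)*(ga+W*N2)*(ga+W*N3) + 2*ga^3 - ga^2*((ga+W*N1)+(ga+W*N2)+(ga+W*N3)) = 0 ->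
  (2*K/N1 - 1) + (2*K/N2 - 1) + (2*K/N3 - 1) - 1 =
  2*(sqrt (a^4 - a^2*b^2 + b^4) - b^2)*(a^2 - sqrt (a^4 - a^2*b^2 + b^4))/(a^2-b^2)^2.
Proof.
intros hb hab hK h1 h2 h3 F ga W Hdet.
assert (HK : 0 < K).
{ destruct (Req_dec K 0) as [e|e]; [|lra]. rewrite e in F. lra. }
assert (HW : 0 < W) by (unfold W; assert (0 < a^2*b^2) by (apply Rmult_lt_0_compat; nra); nra).
assert (Hd2 : W^2*(W*N1*N2*N3 + ga*(N1*N2+N1*N3+N2*N3)) = 0) by (rewrite <- Hdet; ring).
assert (Hd : W*N1*N2*N3 + ga*(N1*N2+N1*N3+N2*N3) = 0).
{ apply Rmult_integral in Hd2. destruct Hd2 as [e|e]; auto. nra. }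
assert (Hga : ga <> 0).
{ intro e. rewrite e in Hd. assert (0 < W*N1*N2*N3) by (apply Rmult_lt_0_compat; [apply Rmult_lt_0_compat; [apply Rmult_lt_0_compat|]|]; auto). lra. }
assert (S : N1*N2+N1*N3+N2*N3 = -(W*N1*N2*N3)/ga).
{ apply (Rmult_eq_reg_l ga); auto. field_simplify; auto. lra. }
assert (Hsum : 2*K/N1 + 2*K/N2 + 2*K/N3 = - 2*K*W/ga).
{ replace (2*K/N1 + 2*K/N2 + 2*K/N3) with (2*K*(N1*N2+N1*N3+N2*N3)/(N1*N2*N3)) by (field; lra).
  rewrite S. field. repeat split; lra. }
assert (Hrat : (2*K/N1 - 1) + (2*K/N2 - 1) + (2*K/N3 - 1) - 1 = K*(a^2+b^2) - 1).
{ replace ((2*K/N1 - 1) + (2*K/N2 - 1) + (2*K/N3 - 1) - 1) with (2*K/N1 + 2*K/N2 + 2*K/N3 - 4) by ring.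
  rewrite Hsum. apply (Rmult_eq_reg_r ga); auto. field_simplify; auto. unfold W, ga. nra. }
rewrite Hrat.
set (dl := sqrt (a^4 - a^2*b^2 + b^4)).
assert (Hdl : dl = ((a^2-b^2)^2*K + (a^2+b^2))/2).
{ unfold dl. rewrite <- (sqrt_pow2 (((a^2-b^2)^2*K + (a^2+b^2))/2)).
  - f_equal. nra.
  - assert (0 <= (a^2-b^2)^2*K) by (apply Rmult_le_pos; [apply pow2_ge_0|lra]). nra. }
rewrite Hdl. assert (0 < (a^2-b^2)) by nra.
replace (2 * (((a^2-b^2)^2*K + (a^2+b^2))/2 - b^2) * (a^2 - ((a^2-b^2)^2*K + (a^2+b^2))/2) / (a^2-b^2)^2) with ((1 - K^2*(a^2-b^2)^2)/2) by (field; nra).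
lra.
Qed.

Lemma vertex_pt a b px py qx qy sx sy :
  (qx-px)*(sy-py) - (qy-py)*(sx-px) <> 0 ->
  normal_bisects a b (px,py) (qx,qy) (sx,sy) ->
  0 < norm (qx-px, qy-py) /\ 0 < norm (sx-px, sy-py) /\
  (px/a^2)*((qx-px)/norm (qx-px, qy-py)) + (py/b^2)*((qy-py)/norm (qx-px, qy-py)) =
  (px/a^2)*((sx-px)/norm (sx-px, sy-py)) + (py/b^2)*((sy-py)/norm (sx-px, sy-py)) /\
  ((px/a^2)^2+(py/b^2)^2)*(2+2*(((qx-px)/norm (qx-px, qy-py))*((sx-px)/norm (sx-px, sy-py))
     +((qy-py)/norm (qx-px, qy-py))*((sy-py)/norm (sx-px, sy-py))))
  = 4*((px/a^2)*((qx-px)/norm (qx-px, qy-py)) + (py/b^2)*((qy-py)/norm (qx-px, qy-py)))^2.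
Proof.
intros Hc Hb.
unfold normal_bisects, bisector_dir, ell_normal, cross, vsub in Hb; cbn [fst snd] in Hb.
assert (Lag : ((qx-px)*(sy-py) - (qy-py)*(sx-px))^2 + ((qx-px)*(sx-px)+(qy-py)*(sy-py))^2
   = ((qx-px)^2+(qy-py)^2)*((sx-px)^2+(sy-py)^2)) by ring.
assert (P0 : 0 < ((qx-px)*(sy-py) - (qy-py)*(sx-px))^2).
{ assert (H := pow2_ge_0 ((qx-px)*(sy-py) - (qy-py)*(sx-px))).
  destruct H as [H|H]; auto. symmetry in H. apply sq0 in H. contradiction. }
assert (Pu : 0 < (qx-px)^2+(qy-py)^2).
{ destruct (pow2_ge_0 (qx-px)); destruct (pow2_ge_0 (qy-py)); try lra.
  exfalso. assert ((qx-px)^2+(qy-py)^2 = 0) by lra. rewrite H1, Rmult_0_l in Lag. assert (H2 := pow2_ge_0 ((qx-px)*(sx-px)+(qy-py)*(sy-py))). lra. }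
assert (Pv : 0 < (sx-px)^2+(sy-py)^2).
{ destruct (pow2_ge_0 (sx-px)); destruct (pow2_ge_0 (sy-py)); try lra.
  exfalso. assert ((sx-px)^2+(sy-py)^2 = 0) by lra. rewrite H1, Rmult_0_r in Lag. assert (H2 := pow2_ge_0 ((qx-px)*(sx-px)+(qy-py)*(sy-py))). lra. }
assert (Lu := norm_pos (qx-px, qy-py) Pu).
assert (Lv := norm_pos (sx-px, sy-py) Pv).
assert (Su := norm_sq (qx-px, qy-py)). assert (Sv := norm_sq (sx-px, sy-py)).
cbn [fst snd] in Su, Sv.
set (Nu := norm (qx-px, qy-py)) in *. set (Nv := norm (sx-px, sy-py)) in *.
destruct (vertex_core (px/a^2) (py/b^2) ((qx-px)/Nu) ((qy-py)/Nu) ((sx-px)/Nv) ((sy-py)/Nv)) as [V1 V2].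
- replace (((qx-px)/Nu)^2 + ((qy-py)/Nu)^2) with (((qx-px)^2+(qy-py)^2)/Nu^2) by (field; lra). rewrite <- Su. field. lra.
- replace (((sx-px)/Nv)^2 + ((sy-py)/Nv)^2) with (((sx-px)^2+(sy-py)^2)/Nv^2) by (field; lra). rewrite <- Sv. field. lra.
- intro e. apply Hc. 
  assert (((qx-px)*(sy-py) - (qy-py)*(sx-px)) = Nu*Nv*((qx - px) / Nu * ((sy - py) / Nv) - (qy - py) / Nu * ((sx - px) / Nv))) by (field; lra).
  rewrite H, e. ring.
- exact Hb.
- auto.
Qed.

Lemma dotS a b X1 Y1 X2 Y2 L: a<>0 -> b<>0 -> L<>0 -> X1^2+Y1^2=1 ->
 (a*X1/a^2)*((a*X2-a*X1)/L) + (b*Y1/b^2)*((b*Y2-b*Y1)/L) = (X1*X2+Y1*Y2-1)/L.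
Proof. intros. replace (X1*X2+Y1*Y2-1) with (X1*X2+Y1*Y2-(X1^2+Y1^2)) by (rewrite H2; ring). field. auto. Qed.

Lemma nS a b X Y: a<>0 -> b<>0 -> (a*X/a^2)^2+(b*Y/b^2)^2 = X^2/a^2+Y^2/b^2.
Proof. intros. field. auto. Qed.

Lemma mS a b K X Y : a<>0 -> b<>0 -> X^2+Y^2=1 ->
  (1-K*(a^2-b^2))*X^2 + (1+K*(a^2-b^2))*Y^2 = (1-K*(a^2+b^2)) + 2*K*a^2*b^2*(X^2/a^2+Y^2/b^2).
Proof. intros ha hb H.
assert (E : (1-K*(a^2-b^2))*X^2 + (1+K*(a^2-b^2))*Y^2 - ((1-K*(a^2+b^2)) + 2*K*a^2*b^2*(X^2/a^2+Y^2/b^2))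
  = (1-K*(a^2+b^2))*(X^2+Y^2-1)) by (field; auto).
rewrite H in E. lra. Qed.

Lemma gram al be X1 Y1 X2 Y2 X3 Y3 :
 (al*X1^2+be*Y1^2)*(al*X2^2+be*Y2^2)*(al*X3^2+be*Y3^2)
 + 2*(al*(X1*X2)+be*(Y1*Y2))*(al*(X1*X3)+be*(Y1*Y3))*(al*(X2*X3)+be*(Y2*Y3))
 - (al*X1^2+be*Y1^2)*(al*(X2*X3)+be*(Y2*Y3))^2
 - (al*X2^2+be*Y2^2)*(al*(X1*X3)+be*(Y1*Y3))^2
 - (al*X3^2+be*Y3^2)*(al*(X1*X2)+be*(Y1*Y2))^2 = 0.
Proof. ring. Qed.

Lemma ellS a b X Y : a<>0 -> b<>0 -> on_ellipse a b (a*X, b*Y) -> X^2+Y^2=1.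
Proof. unfold on_ellipse; cbn [fst snd]. intros ha hb H. rewrite <- H. field. auto. Qed.
Lemma normsym p q r t : norm (p-q, r-t) = norm (q-p, t-r).
Proof. unfold norm; cbn [fst snd]; f_equal; ring. Qed.

Lemma dist0 X1 Y1 X2 Y2 : (X1-X2)^2+(Y1-Y2)^2 = 0 -> X1 = X2 /\ Y1 = Y2.
Proof. intro H. assert (h1 := pow2_ge_0 (X1-X2)). assert (h2 := pow2_ge_0 (Y1-Y2)).
assert ((X1-X2)^2 = 0) by lra. assert ((Y1-Y2)^2 = 0) by lra.
apply sq0 in H0. apply sq0 in H1. lra. Qed.

Lemma Npos a b X Y : 0 < b -> b < a -> X^2+Y^2 = 1 -> 0 < X^2/a^2+Y^2/b^2.
Proof. intros hb hab H.
replace (X^2/a^2+Y^2/b^2) with ((b^2*X^2+a^2*Y^2)/(a^2*b^2)) by (field; lra).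
apply Rdiv_lt_0_compat.
- assert (0 <= (a^2-b^2)*Y^2) by (apply Rmult_le_pos; nra). nra.
- apply Rmult_lt_0_compat; nra.
Qed.

Theorem theorem1 (a b : R) (hb : 0 < b) (hab : b < a) :
  let delta := sqrt (a ^ 4 - a ^ 2 * b ^ 2 + b ^ 4) in
  forall (P1 P2 P3 : pt) (r Rc : R),
    billiard3 a b P1 P2 P3 ->
    is_inradius P1 P2 P3 r ->
    is_circumradius P1 P2 P3 Rc ->
    r / Rc = 2 * (delta - b ^ 2) * (a ^ 2 - delta) / (a ^ 2 - b ^ 2) ^ 2.
Proof.
intros delta [x1 y1] [x2 y2] [x3 y3] r Rc Hbil Hin Hcirc.
assert (ha0 : a <> 0) by lra. assert (hb0 : b <> 0) by lra.
assert (exists X, x1 = a*X) as [X1 ->] by (exists (x1/a); field; auto).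
assert (exists X, x2 = a*X) as [X2 ->] by (exists (x2/a); field; auto).
assert (exists X, x3 = a*X) as [X3 ->] by (exists (x3/a); field; auto).
assert (exists X, y1 = b*X) as [Y1 ->] by (exists (y1/b); field; auto).
assert (exists X, y2 = b*X) as [Y2 ->] by (exists (y2/b); field; auto).
assert (exists X, y3 = b*X) as [Y3 ->] by (exists (y3/b); field; auto).
destruct Hbil as [Hnd [E1 [E2 [E3 [B1 [B2 B3]]]]]].
apply ellS in E1; auto. apply ellS in E2; auto. apply ellS in E3; auto.
unfold nondegenerate, cross, vsub in Hnd; cbn [fst snd] in Hnd.
set (D := (a*X2 - a*X1)*(b*Y3 - b*Y1) - (b*Y2 - b*Y1)*(a*X3 - a*X1)) in Hnd.
assert (nd2 : (a*X3-a*X2)*(b*Y1-b*Y2) - (b*Y3-b*Y2)*(a*X1-a*X2) <> 0) by (replace (_ - _) with D by (unfold D; ring); auto).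
assert (nd3 : (a*X1-a*X3)*(b*Y2-b*Y3) - (b*Y1-b*Y3)*(a*X2-a*X3) <> 0) by (replace (_ - _) with D by (unfold D; ring); auto).
destruct (vertex_pt a b (a*X1) (b*Y1) (a*X2) (b*Y2) (a*X3) (b*Y3) Hnd B1) as [L12p [L13p [eq1 cs1]]].
destruct (vertex_pt a b (a*X2) (b*Y2) (a*X3) (b*Y3) (a*X1) (b*Y1) nd2 B2) as [L23p [L21p [eq2 cs2]]].
destruct (vertex_pt a b (a*X3) (b*Y3) (a*X1) (b*Y1) (a*X2) (b*Y2) nd3 B3) as [L31p [L32p [eq3 cs3]]].
rewrite (normsym (a*X1) (a*X2) (b*Y1) (b*Y2)) in L21p, eq2, cs2.
rewrite (normsym (a*X1) (a*X3) (b*Y1) (b*Y3)) in L31p, eq3, cs3.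
rewrite (normsym (a*X2) (a*X3) (b*Y2) (b*Y3)) in L32p, eq3, cs3.
assert (S12 := norm_sq (a*X2-a*X1, b*Y2-b*Y1)).
assert (S13 := norm_sq (a*X3-a*X1, b*Y3-b*Y1)).
assert (S23 := norm_sq (a*X3-a*X2, b*Y3-b*Y2)).
cbn [fst snd] in S12, S13, S23.
set (L12 := norm (a*X2-a*X1, b*Y2-b*Y1)) in *.
set (L13 := norm (a*X3-a*X1, b*Y3-b*Y1)) in *.
set (L23 := norm (a*X3-a*X2, b*Y3-b*Y2)) in *.
rewrite (dotS a b X1 Y1 X2 Y2 L12), (dotS a b X1 Y1 X3 Y3 L13) in eq1 by lra.
rewrite (dotS a b X1 Y1 X2 Y2 L12), (nS a b X1 Y1) in cs1 by lra.
rewrite (dotS a b X2 Y2 X3 Y3 L23), (dotS a b X2 Y2 X1 Y1 L12) in eq2 by lra.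
rewrite (dotS a b X2 Y2 X3 Y3 L23), (nS a b X2 Y2) in cs2 by lra.
rewrite (dotS a b X3 Y3 X1 Y1 L13), (dotS a b X3 Y3 X2 Y2 L23) in eq3 by lra.
rewrite (dotS a b X3 Y3 X1 Y1 L13), (nS a b X3 Y3) in cs3 by lra.
set (G := (X1 * X2 + Y1 * Y2 - 1) / L12) in *.
assert (g13 : (X1*X3+Y1*Y3-1)/L13 = G) by (symmetry; exact eq1).
assert (g23 : (X2*X3+Y2*Y3-1)/L23 = G) by (rewrite eq2; unfold G; f_equal; ring).
assert (g31 : (X3*X1+Y3*Y1-1)/L13 = G) by (rewrite <- g13; f_equal; ring).
rewrite g23 in cs2. rewrite g31 in cs3.
set (K := G^2) in *.
assert (s12 : K*((a*X2-a*X1)^2+(b*Y2-b*Y1)^2) = (X1*X2+Y1*Y2-1)^2) by (rewrite <- S12; unfold K, G; field; lra).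
assert (s13 : K*((a*X3-a*X1)^2+(b*Y3-b*Y1)^2) = (X1*X3+Y1*Y3-1)^2) by (rewrite <- S13; unfold K; rewrite <- g13; field; lra).
assert (s23 : K*((a*X3-a*X2)^2+(b*Y3-b*Y2)^2) = (X2*X3+Y2*Y3-1)^2) by (rewrite <- S23; unfold K; rewrite <- g23; field; lra).
assert (d12 : (X1-X2)^2+(Y1-Y2)^2 <> 0).
{ intro h; apply dist0 in h; destruct h as [h h']; apply Hnd; unfold D; rewrite h, h'; ring. }
assert (d13 : (X1-X3)^2+(Y1-Y3)^2 <> 0).
{ intro h; apply dist0 in h; destruct h as [h h']; apply Hnd; unfold D; rewrite h, h'; ring. }
assert (d23 : (X2-X3)^2+(Y2-Y3)^2 <> 0).
{ intro h; apply dist0 in h; destruct h as [h h']; apply Hnd; unfold D; rewrite h, h'; ring. }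
assert (R12 := side a b X1 Y1 X2 Y2 K E1 E2 d12 s12).
assert (R13 := side a b X1 Y1 X3 Y3 K E1 E3 d13 s13).
assert (R23 := side a b X2 Y2 X3 Y3 K E2 E3 d23 s23).
assert (HK0 : 0 <= K) by (unfold K; apply pow2_ge_0).
assert (hc1 : 0 < a^2-b^2) by (clear - hb hab; nra).
assert (hc2 : a^2-b^2 < a^2+b^2) by (clear - hb hab; nra).
assert (F := closure K (a^2-b^2) (a^2+b^2) X1 Y1 X2 Y2 X3 Y3 hc1 hc2 HK0 E1 E2 E3 d12 d23 R12 R13 R23).
assert (L31e : norm (vsub (a*X1,b*Y1) (a*X3,b*Y3)) = L13) by (unfold vsub; cbn [fst snd]; apply normsym).
assert (Hr := incircle (a*X1) (b*Y1) (a*X2) (b*Y2) (a*X3) (b*Y3) r L12p L23p ltac:(rewrite L31e; exact L13p) Hin).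
change (norm (vsub (a*X2,b*Y2) (a*X1,b*Y1))) with L12 in Hr.
change (norm (vsub (a*X3,b*Y3) (a*X2,b*Y2))) with L23 in Hr.
rewrite L31e in Hr. fold D in Hr.
destruct (circum (a*X1) (b*Y1) (a*X2) (b*Y2) (a*X3) (b*Y3) Rc Hcirc) as [Rc0 Hc4].
rewrite <- S12, <- S13, <- S23 in Hc4. fold D in Hc4.
assert (T := trig (a*X1) (b*Y1) (a*X2) (b*Y2) (a*X3) (b*Y3) L12 L13 L23 L12p L13p L23p S12 S13 S23).
fold D in T.
assert (HD : 0 < Rabs D) by (apply Rabs_pos_lt; auto).
assert (HR2 : 2*Rc*Rabs D = L12*L13*L23).
{ assert (h1 : (2*Rc*Rabs D)^2 = (L12*L13*L23)^2) by (replace ((2*Rc*Rabs D)^2) with (4*Rc^2*(Rabs D)^2) by ring; rewrite pow2_abs, Hc4; ring).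
  assert (0 <= 2*Rc*Rabs D) by (apply Rmult_le_pos; lra).
  assert (0 < L12*L13*L23) by (apply Rmult_lt_0_compat; [apply Rmult_lt_0_compat|]; lra).
  clear - h1 H H0. nra. }
assert (Hrat : r / Rc = 2*D^2/((L12+L23+L13)*(L12*L13*L23))).
{ assert (HRc : Rc = L12*L13*L23/(2*Rabs D)) by (rewrite <- HR2; field; lra).
  assert (Hrr : r = Rabs D/(L12+L23+L13)) by (rewrite <- Hr; field; lra).
  rewrite HRc, Hrr, <- (pow2_abs D). field. repeat split; lra. }
rewrite Hrat, <- T.
assert (N1p := Npos a b X1 Y1 hb hab E1).
assert (N2p := Npos a b X2 Y2 hb hab E2).
assert (N3p := Npos a b X3 Y3 hb hab E3).
set (N1 := X1^2/a^2+Y1^2/b^2) in *.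
set (N2 := X2^2/a^2+Y2^2/b^2) in *.
set (N3 := X3^2/a^2+Y3^2/b^2) in *.
set (c1 := (a * X2 - a * X1) / L12 * ((a * X3 - a * X1) / L13) + (b * Y2 - b * Y1) / L12 * ((b * Y3 - b * Y1) / L13)) in *.
set (c2 := (a * X3 - a * X2) / L23 * ((a * X1 - a * X2) / L12) + (b * Y3 - b * Y2) / L23 * ((b * Y1 - b * Y2) / L12)) in *.
set (c3 := (a * X1 - a * X3) / L13 * ((a * X2 - a * X3) / L23) + (b * Y1 - b * Y3) / L13 * ((b * Y2 - b * Y3) / L23)) in *.
assert (C1 : c1 = 2*K/N1 - 1) by (apply (Rmult_eq_reg_l (2*N1)); [|lra]; field_simplify; [|lra]; lra).
assert (C2 : c2 = 2*K/N2 - 1) by (apply (Rmult_eq_reg_l (2*N2)); [|lra]; field_simplify; [|lra]; lra).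
assert (C3 : c3 = 2*K/N3 - 1) by (apply (Rmult_eq_reg_l (2*N3)); [|lra]; field_simplify; [|lra]; lra).
rewrite C1, C2, C3. unfold delta.
apply final_alg; auto.
cbv zeta.
assert (Hg := gram (1-K*(a^2-b^2)) (1+K*(a^2-b^2)) X1 Y1 X2 Y2 X3 Y3).
rewrite R12, R13, R23 in Hg.
rewrite (mS a b K X1 Y1), (mS a b K X2 Y2), (mS a b K X3 Y3) in Hg by auto.
fold N1 N2 N3 in Hg.
rewrite <- Hg. ring.
Qed.
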